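(* For every positive integer $m$ and every complex number $\alpha \neq 0$, $$\sum_{k=1}^m \frac{k^\alpha}{m-k+1} = \sum_{j=1}^m j!\, S(\alpha, j) \binom{m+1}{j} \left(H_{m+1} - H_j\right).$$
   Context: For a complex number $\alpha \neq 0$ and a positive integer $k$, the Stirling function of the second kind is $$S(\alpha, k) = \frac{1}{k!} \sum_{j=1}^k (-1)^{k-j} \binom{k}{j} j^\alpha,$$ where for a positive integer $j$, $j^\alpha = e^{\alpha \ln j}$ with $\ln j$ the real logarithm. $H_k = 1 + \frac12 + \cdots + \frac1k$ denotes the $k$-th harmonic number. *)

(* Defs.v *)
From Stdlib Require Import Reals Arith Factorial.
Open Scope R_scope.

Record Cplx := mkC { Re : R ; Im : R }.

Definition C0 : Cplx := mkC 0 0.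
Definition Cadd (z w : Cplx) : Cplx := mkC (Re z + Re w) (Im z + Im w).
Definition Cmul (z w : Cplx) : Cplx :=
  mkC (Re z * Re w - Im z * Im w) (Re z * Im w + Im z * Re w).
Definition RtoC (r : R) : Cplx := mkC r 0.
Definition Cscale (r : R) (z : Cplx) : Cplx := Cmul (RtoC r) z.

Definition Cexp (z : Cplx) : Cplx :=
  mkC (exp (Re z) * cos (Im z)) (exp (Re z) * sin (Im z)).

Definition cpow (j : nat) (alpha : Cplx) : Cplx :=
  Cexp (Cmul alpha (RtoC (ln (INR j)))).

Fixpoint Csum1 (n : nat) (f : nat -> Cplx) : Cplx :=
  match n with
  | O => C0
  | S n' => Cadd (Csum1 n' f) (f (S n'))
  end.

Fixpoint Rsum1 (n : nat) (f : nat -> R) : R :=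
  match n with
  | O => 0
  | S n' => Rsum1 n' f + f (S n')
  end.

Definition harm (k : nat) : R := Rsum1 k (fun i => / INR i).

Definition stirling2 (alpha : Cplx) (k : nat) : Cplx :=
  Cscale (/ INR (fact k))
    (Csum1 k (fun j => Cscale ((-1) ^ (k - j) * C k j) (cpow j alpha))).

(* Main.v *)
Require Import Defs.
From Stdlib Require Import Reals Arith Factorial Lra Lia.
Open Scope R_scope.

Fixpoint Cb (n k : nat) : R :=
  match n, k with
  | O, O => 1
  | O, S _ => 0
  | S _, O => 1
  | S n', S k' => Cb n' k' + Cb n' (S k')
  end.

Lemma Cb_big : forall n k, (n < k)%nat -> Cb n k = 0.
Proof.
  induction n; intros k H; destruct k; try lia; simpl; auto.
  rewrite !IHn; lia || lra.
Qed.

Lemma C_0 : forall n, C n 0 = 1.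
Proof. intro n; unfold C; rewrite Nat.sub_0_r; simpl; field; apply INR_fact_neq_0. Qed.
Lemma C_nn : forall n, C n n = 1.
Proof. intro n; unfold C; rewrite Nat.sub_diag; simpl; field; apply INR_fact_neq_0. Qed.

Lemma Cb_C : forall n k, (k <= n)%nat -> Cb n k = C n k.
Proof.
  induction n; intros k H.
  - destruct k; [|lia]. simpl. rewrite C_0; auto.
  - destruct k. { simpl. rewrite C_0; auto. }
    simpl. destruct (Nat.eq_dec k n).
    + subst. rewrite (Cb_big n (S n)) by lia. rewrite IHn by lia. rewrite !C_nn. lra.
    + rewrite !IHn by lia. apply pascal. lia.
Qed.

Definition Dsum (N : nat) (a : nat -> R) : R :=
  sum_f_R0 (fun l => (-1) ^ l * Cb N l * a l) N.

Lemma Dsum_diff : forall N a, Dsum (S N) a = Dsum N (fun l => a l - a (S l)).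
Proof.
  intros N a. unfold Dsum.
  rewrite decomp_sum by lia. simpl pred.
  assert (E: sum_f_R0 (fun i => (-1) ^ S i * Cb (S N) (S i) * a (S i)) N =
     sum_f_R0 (fun i => - ((-1) ^ i * Cb N i * a (S i))) N +
     sum_f_R0 (fun i => (-1) ^ S i * Cb N (S i) * a (S i)) N).
  { rewrite <- plus_sum. apply sum_eq. intros i _. simpl. ring. }
  rewrite E; clear E.
  assert (E2: (-1) ^ 0 * Cb (S N) 0 * a 0%nat +
     sum_f_R0 (fun i => (-1) ^ S i * Cb N (S i) * a (S i)) N =
     sum_f_R0 (fun l => (-1) ^ l * Cb N l * a l) N).
  { destruct N.
    - simpl. ring.
    - rewrite (decomp_sum (fun l => (-1) ^ l * Cb (S N) l * a l)) by lia.
      simpl pred. rewrite tech5. rewrite (Cb_big (S N) (S (S N))) by lia.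
      simpl. ring. }
  assert (F: sum_f_R0 (fun l => (-1)^l*Cb N l*(a l - a (S l))) N =
    sum_f_R0 (fun l => (-1)^l*Cb N l*a l) N + sum_f_R0 (fun i => - ((-1)^i*Cb N i*a (S i))) N).
  { rewrite <- plus_sum. apply sum_eq. intros i _. ring. }
  rewrite F. lra.
Qed.

Lemma Dsum_ext : forall N a b, (forall l, (l <= N)%nat -> a l = b l) -> Dsum N a = Dsum N b.
Proof. intros. unfold Dsum. apply sum_eq. intros. rewrite H; auto. Qed.

Lemma Dsum_minus : forall N a b, Dsum N (fun l => a l - b l) = Dsum N a - Dsum N b.
Proof. intros. unfold Dsum. rewrite <- minus_sum. apply sum_eq. intros; ring. Qed.

Lemma Dsum_scal : forall N c a, Dsum N (fun l => c * a l) = c * Dsum N a.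
Proof. intros. unfold Dsum. rewrite scal_sum. apply sum_eq. intros; ring. Qed.

Lemma Dsum_const : forall N c, Dsum (S N) (fun _ => c) = 0.
Proof.
  intros. rewrite Dsum_diff. unfold Dsum.
  rewrite <- (Rmult_0_l (sum_f_R0 (fun l => (-1)^l * Cb N l) N)).
  rewrite scal_sum. apply sum_eq. intros; ring.
Qed.

Lemma INR_fact_S : forall n, INR (fact (S n)) = INR (S n) * INR (fact n).
Proof. intro n. change (fact (S n)) with (S n * fact n)%nat. apply mult_INR. Qed.

Lemma Fsum : forall N d,
  Dsum N (fun l => / INR (S d + l)) = INR (fact N) * INR (fact d) / INR (fact (N + S d)).
Proof.
  induction N; intro d.
  - unfold Dsum. cbn [sum_f_R0 Cb pow]. rewrite Nat.add_0_r, Nat.add_0_l.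
    rewrite INR_fact_S. change (fact 0) with 1%nat. change (INR 1) with 1. field.
    split; [apply INR_fact_neq_0|]. apply not_0_INR; lia.
  - rewrite Dsum_diff.
    rewrite (Dsum_ext N _ (fun l => / INR (S d + l) - / INR (S (S d) + l))).
    2:{ intros l _. do 2 f_equal. f_equal. lia. }
    rewrite Dsum_minus, IHN, IHN.
    replace (N + S (S d))%nat with (S (N + S d)) by lia.
    replace (S N + S d)%nat with (S (N + S d)) by lia.
    rewrite !INR_fact_S.
    assert (0 < INR (fact (N + S d))) by (apply lt_0_INR, lt_O_fact).
    assert (0 < INR (fact d)) by (apply lt_0_INR, lt_O_fact).
    rewrite !S_INR, !plus_INR, !S_INR.
    assert (0 <= INR N) by apply pos_INR.
    assert (0 <= INR d) by apply pos_INR.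
    field. lra.
Qed.

Lemma harm_S : forall k, harm (S k) = harm k + / INR (S k).
Proof. reflexivity. Qed.

Lemma Hsum : forall N i,
  Dsum (S N) (fun l => harm (i + l)) = - (INR (fact N) * INR (fact i) / INR (fact (N + S i))).
Proof.
  intros. rewrite Dsum_diff.
  rewrite (Dsum_ext N _ (fun l => (-1) * / INR (S i + l))).
  2:{ intros l _. rewrite Nat.add_succ_r, harm_S. replace (S (i + l)) with (S i + l)%nat by lia. ring. }
  rewrite Dsum_scal, Fsum. ring.
Qed.

Lemma coef : forall i N,
  sum_f_R0 (fun l => C (i + N + 1) (i + l) * (harm (i + N + 1) - harm (i + l)) *
                     ((-1) ^ (i + l - i) * C (i + l) i)) N = / INR (N + 1).
Proof.
  intros i N.
  rewrite (sum_eq _ (fun l => ((-1) ^ l * Cb (S N) l * (harm (i + N + 1) - harm (i + l))) * C (i + N + 1) i)).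
  2:{ intros l Hl. rewrite Cb_C by lia. replace (i + l - i)%nat with l by lia.
      assert (E: C (i + N + 1) (i + l) * C (i + l) i = C (i + N + 1) i * C (S N) l).
      { unfold C. replace (i + N + 1 - (i + l))%nat with (S N - l)%nat by lia.
        replace (i + l - i)%nat with l by lia.
        replace (i + N + 1 - i)%nat with (S N) by lia.
        assert (INR (fact (i+l)) <> 0) by apply INR_fact_neq_0.
        assert (INR (fact (S N - l)) <> 0) by apply INR_fact_neq_0.
        assert (INR (fact (S N)) <> 0) by apply INR_fact_neq_0.
        assert (INR (fact i) <> 0) by apply INR_fact_neq_0.
        assert (INR (fact l) <> 0) by apply INR_fact_neq_0.
        field. repeat split; auto. }
      transitivity ((C (i + N + 1) (i + l) * C (i + l) i) * ((-1) ^ l * (harm (i + N + 1) - harm (i + l)))).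
      ring. rewrite E. ring. }
  rewrite <- scal_sum.
  assert (Z: sum_f_R0 (fun l => (-1) ^ l * Cb (S N) l * (harm (i + N + 1) - harm (i + l))) N
             = Dsum (S N) (fun l => harm (i + N + 1) - harm (i + l))).
  { unfold Dsum. rewrite tech5. replace (i + S N)%nat with (i + N + 1)%nat by lia. ring. }
  rewrite Z, Dsum_minus, Dsum_const, Hsum.
  unfold C. replace (i + N + 1 - i)%nat with (S N) by lia.
  replace (N + S i)%nat with (i + N + 1)%nat by lia.
  rewrite INR_fact_S.
  assert (INR (fact (i+N+1)) <> 0) by apply INR_fact_neq_0.
  assert (INR (fact N) <> 0) by apply INR_fact_neq_0.
  assert (INR (fact i) <> 0) by apply INR_fact_neq_0.
  rewrite plus_INR, S_INR. simpl INR.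
  assert (0 <= INR N) by apply pos_INR.
  field. repeat split; auto; lra.
Qed.

Lemma Rsum1_S : forall n f, Rsum1 (S n) f = Rsum1 n f + f (S n).
Proof. reflexivity. Qed.

Lemma Rsum1_ext_r : forall n f g, (forall k, (1 <= k <= n)%nat -> f k = g k) -> Rsum1 n f = Rsum1 n g.
Proof.
  induction n; intros f g H; simpl; auto.
  rewrite (IHn f g) by (intros; apply H; lia). rewrite H by lia. auto.
Qed.

Lemma Rsum1_ext : forall n f g, (forall k, f k = g k) -> Rsum1 n f = Rsum1 n g.
Proof. intros; apply Rsum1_ext_r; auto. Qed.

Lemma Rsum1_plus : forall n f g, Rsum1 n (fun k => f k + g k) = Rsum1 n f + Rsum1 n g.
Proof. induction n; intros; simpl; [ring|]. rewrite IHn; ring. Qed.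

Lemma Rsum1_scal : forall n c f, c * Rsum1 n f = Rsum1 n (fun k => c * f k).
Proof. induction n; intros; simpl; [ring|]. rewrite <- IHn; ring. Qed.

Lemma Rsum1_zero : forall k i g, (k < i)%nat ->
  Rsum1 k (fun j => if (i <=? j)%nat then g j else 0) = 0.
Proof.
  induction k; intros i g H; simpl; auto.
  rewrite IHk by lia. destruct (Nat.leb_spec i (S k)); [lia|]. ring.
Qed.

Lemma swap : forall m (a : nat -> nat -> R),
  Rsum1 m (fun j => Rsum1 j (fun i => a i j)) =
  Rsum1 m (fun i => Rsum1 m (fun j => if (i <=? j)%nat then a i j else 0)).
Proof.
  induction m; intros a; [reflexivity|].
  rewrite Rsum1_S, IHm.
  rewrite (Rsum1_ext (S m) (fun i => Rsum1 (S m) (fun j => if (i <=? j)%nat then a i j else 0)) (fun i => Rsum1 m (fun j => if (i <=? j)%nat then a i j else 0)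
        + (if (i <=? S m)%nat then a i (S m) else 0))) by (intros; apply Rsum1_S).
  rewrite Rsum1_plus, (Rsum1_S m (fun k => Rsum1 m (fun j => if (k <=? j)%nat then a k j else 0))). rewrite (Rsum1_zero m (S m) (a (S m))) by lia.
  rewrite (Rsum1_ext_r (S m) (fun i => if (i <=? S m)%nat then a i (S m) else 0) (fun i => a i (S m))).
  2:{ intros k Hk. destruct (Nat.leb_spec k (S m)); [auto|lia]. }
  ring.
Qed.

Lemma reindex : forall i N f, (1 <= i)%nat ->
  Rsum1 (i + N) (fun j => if (i <=? j)%nat then f j else 0) = sum_f_R0 (fun l => f (i + l)%nat) N.
Proof.
  intros i N f Hi. induction N.
  - destruct i; [lia|]. rewrite Nat.add_0_r, Rsum1_S, Rsum1_zero by lia.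
    rewrite Nat.leb_refl. simpl. rewrite Nat.add_0_r. ring.
  - rewrite Nat.add_succ_r, Rsum1_S, IHN, tech5.
    destruct (Nat.leb_spec i (S (i + N))); [|lia]. rewrite Nat.add_succ_r. auto.
Qed.

Lemma main_real : forall (x : nat -> R) m,
  Rsum1 m (fun k => / INR (m - k + 1) * x k) =
  Rsum1 m (fun j => (INR (fact j) * C (m + 1) j * (harm (m + 1) - harm j)) *
     (/ INR (fact j) * Rsum1 j (fun i => ((-1) ^ (j - i) * C j i) * x i))).
Proof.
  intros x m.
  rewrite (Rsum1_ext m (fun j => (INR (fact j) * C (m + 1) j * (harm (m + 1) - harm j)) *
     (/ INR (fact j) * Rsum1 j (fun i => ((-1) ^ (j - i) * C j i) * x i))) (fun j => Rsum1 j (fun i =>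
     (C (m + 1) j * (harm (m + 1) - harm j) * ((-1) ^ (j - i) * C j i)) * x i))).
  2:{ intros j. 
      assert (INR (fact j) <> 0) by apply INR_fact_neq_0.
      replace (INR (fact j) * C (m + 1) j * (harm (m + 1) - harm j) *
        (/ INR (fact j) * Rsum1 j (fun i => (-1) ^ (j - i) * C j i * x i)))
      with ((C (m + 1) j * (harm (m + 1) - harm j)) * Rsum1 j (fun i => (-1) ^ (j - i) * C j i * x i))
      by (field; auto).
      rewrite Rsum1_scal. apply Rsum1_ext. intros; ring. }
  rewrite (swap m (fun i j => C (m + 1) j * (harm (m + 1) - harm j) * ((-1) ^ (j - i) * C j i) * x i)).
  apply Rsum1_ext_r. intros i Hi.
  rewrite (Rsum1_ext m _ (fun j => x i * (if (i <=? j)%nat then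
       C (m + 1) j * (harm (m + 1) - harm j) * ((-1) ^ (j - i) * C j i) else 0))).
  2:{ intros j. destruct (i <=? j)%nat; ring. }
  rewrite <- Rsum1_scal.
  remember (m - i)%nat as N. assert (m = i + N)%nat by lia. subst m.
  rewrite reindex by lia. rewrite coef.
  replace (i + N - i + 1)%nat with (N + 1)%nat by lia. ring.
Qed.

Lemma Cext : forall z w, Re z = Re w -> Im z = Im w -> z = w.
Proof. intros [a b] [c d]; simpl; intros; subst; auto. Qed.
Lemma Re_Cscale : forall r z, Re (Cscale r z) = r * Re z.
Proof. intros. unfold Cscale, Cmul, RtoC; simpl; ring. Qed.
Lemma Im_Cscale : forall r z, Im (Cscale r z) = r * Im z.
Proof. intros. unfold Cscale, Cmul, RtoC; simpl; ring. Qed.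
Lemma Re_Csum1 : forall n f, Re (Csum1 n f) = Rsum1 n (fun k => Re (f k)).
Proof. induction n; intros; simpl; auto. rewrite IHn; auto. Qed.
Lemma Im_Csum1 : forall n f, Im (Csum1 n f) = Rsum1 n (fun k => Im (f k)).
Proof. induction n; intros; simpl; auto. rewrite IHn; auto. Qed.

Theorem proposition4 (m : nat) (alpha : Cplx) :
  (1 <= m)%nat -> alpha <> C0 ->
  Csum1 m (fun k => Cscale (/ INR (m - k + 1)) (cpow k alpha)) =
  Csum1 m (fun j => Cscale (INR (fact j) * C (m + 1) j * (harm (m + 1) - harm j))
                           (stirling2 alpha j)).
Proof.
  intros _ _. apply Cext.
  - rewrite !Re_Csum1.
    transitivity (Rsum1 m (fun k => / INR (m - k + 1) * Re (cpow k alpha))).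
    { apply Rsum1_ext; intro k; apply Re_Cscale. }
    rewrite (main_real (fun i => Re (cpow i alpha))).
    apply Rsum1_ext; intro j. rewrite Re_Cscale. unfold stirling2.
    rewrite Re_Cscale, Re_Csum1. f_equal. f_equal.
    apply Rsum1_ext; intro i; rewrite Re_Cscale; reflexivity.
  - rewrite !Im_Csum1.
    transitivity (Rsum1 m (fun k => / INR (m - k + 1) * Im (cpow k alpha))).
    { apply Rsum1_ext; intro k; apply Im_Cscale. }
    rewrite (main_real (fun i => Im (cpow i alpha))).
    apply Rsum1_ext; intro j. rewrite Im_Cscale. unfold stirling2.
    rewrite Im_Cscale, Im_Csum1. f_equal. f_equal.
    apply Rsum1_ext; intro i; rewrite Im_Cscale; reflexivity.
Qed.
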